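(* For all complex $q$ with $|q|<1$, $$\psi(q)\psi(q^7)=\psi(q^8)\varphi(q^{28})+q^6\varphi(q^4)\psi(q^{56})+q\psi(q^{16})\varphi(q^{56})+q^3\psi(q^4)\psi(q^{28})+q^{13}\varphi(q^8)\psi(q^{112}).$$
   Context: Ramanujan's theta functions are $\varphi(q)=\sum_{n=-\infty}^{\infty}q^{n^2}$ and $\psi(q)=\sum_{n=0}^{\infty}q^{n(n+1)/2}$ for $|q|<1$. *)

(* Defs.v *)
From Stdlib Require Import Reals.
From Coquelicot Require Import Coquelicot.
Open Scope C_scope.

(* Sum of a complex series, computed componentwise (real and imaginary parts);
   it equals the usual sum whenever the series converges. *)
Definition CSeries (a : nat -> C) : C :=
  (Series (fun n => Re (a n)), Series (fun n => Im (a n))).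

(* Ramanujan's phi(q) = sum_{n in Z} q^(n^2), split as the terms n >= 0
   plus the terms n = -(k+1), k >= 0 (for which n^2 = (k+1)^2). *)
Definition rphi (q : C) : C :=
  CSeries (fun n => q ^ (n * n)) + CSeries (fun k => q ^ (S k * S k)).

Definition rpsi (q : C) : C :=
  CSeries (fun n => q ^ (Nat.div (n * (n + 1)) 2)).

(* Main.v *)
Require Import Defs.
From Stdlib Require Import Reals.
From Coquelicot Require Import Coquelicot.
Open Scope C_scope.
From Stdlib Require Import List ZArith Lia Arith Lra.
Import ListNotations.

Module Base.
Local Open Scope bool_scope.


Definition cntl {A} (P : A -> bool) (l : list A) : nat := length (filter P l).

Lemma NoDup_map_on {A B} (f : A -> B) (g : B -> A) (l : list A) :
  (forall x, In x l -> g (f x) = x) -> NoDup l -> NoDup (map f l).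
Proof.
  intros H Hn. apply NoDup_map_NoDup_ForallPairs; auto.
  intros a b Ha Hb E. rewrite <- (H a Ha), <- (H b Hb), E. reflexivity.
Qed.

Lemma cntl_le {A B} (l1 : list A) (l2 : list B) P Q (f : A -> B) (g : B -> A) :
  NoDup l1 ->
  (forall b, Q b = true -> In b l2) ->
  (forall a, P a = true -> Q (f a) = true /\ g (f a) = a) ->
  (cntl P l1 <= cntl Q l2)%nat.
Proof.
  intros N1 C2 H. unfold cntl.
  rewrite <- (length_map f).
  apply NoDup_incl_length.
  - apply NoDup_map_on with g.
    + intros x Hx. apply filter_In in Hx. apply H, Hx.
    + apply NoDup_filter, N1.
  - intros y Hy. apply in_map_iff in Hy. destruct Hy as [x [<- Hx]].
    apply filter_In in Hx. destruct (H x (proj2 Hx)) as [HQ _].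
    apply filter_In. split; auto.
Qed.

Lemma count_bij {A B} (l1 : list A) (l2 : list B) P Q (f : A -> B) (g : B -> A) :
  NoDup l1 -> NoDup l2 ->
  (forall a, P a = true -> In a l1) ->
  (forall b, Q b = true -> In b l2) ->
  (forall a, P a = true -> Q (f a) = true /\ g (f a) = a) ->
  (forall b, Q b = true -> P (g b) = true /\ f (g b) = b) ->
  cntl P l1 = cntl Q l2.
Proof.
  intros. apply Nat.le_antisymm.
  - apply cntl_le with f g; auto.
  - apply cntl_le with g f; auto.
Qed.

Lemma cntl_map {A B} (f : A -> B) P l : cntl P (map f l) = cntl (fun x => P (f x)) l.
Proof.
  unfold cntl; induction l; simpl; auto. destruct (P (f a)); simpl; auto.
Qed.

Lemma cntl_app {A} P (l1 l2 : list A) : cntl P (l1 ++ l2) = (cntl P l1 + cntl P l2)%nat.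
Proof. unfold cntl. rewrite filter_app, length_app. reflexivity. Qed.

Lemma cntl_or {A} (P P1 P2 : A -> bool) l :
  (forall x, P x = P1 x || P2 x) -> (forall x, P1 x && P2 x = false) ->
  cntl P l = (cntl P1 l + cntl P2 l)%nat.
Proof.
  intros H1 H2. unfold cntl; induction l as [|a l IH]; simpl; auto.
  rewrite H1. specialize (H2 a).
  destruct (P1 a), (P2 a); simpl in *; try discriminate; lia.
Qed.

Lemma cntl_false {A} (P : A -> bool) l : (forall x, P x = false) -> cntl P l = 0%nat.
Proof.
  intros H. unfold cntl; induction l; simpl; auto. rewrite H; auto.
Qed.

Lemma NoDup_list_prod {A B} (l1 : list A) (l2 : list B) :
  NoDup l1 -> NoDup l2 -> NoDup (list_prod l1 l2).
Proof.
  induction 1 as [|a l1 Ha N1 IH]; intros N2; simpl. constructor.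
  apply NoDup_app; auto.
  - apply NoDup_map_on with snd; auto.
  - intros [x y] H1 H2. apply in_map_iff in H1. destruct H1 as [z [E _]].
    inversion E; subst. apply in_prod_iff in H2. tauto.
Qed.

Definition natbox (K : nat) := list_prod (seq 0 K) (seq 0 K).

Lemma natbox_NoDup K : NoDup (natbox K).
Proof. apply NoDup_list_prod; apply seq_NoDup. Qed.

Lemma in_natbox K m n : (m < K)%nat -> (n < K)%nat -> In (m, n) (natbox K).
Proof. intros. apply in_prod; apply in_seq; lia. Qed.

Definition zrange (B : nat) : list Z :=
  map (fun i => Z.of_nat i - Z.of_nat B)%Z (seq 0 (2 * B + 1)).

Lemma zrange_NoDup B : NoDup (zrange B).
Proof.
  apply NoDup_map_on with (fun z => Z.to_nat (z + Z.of_nat B)).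
  - intros x _. lia.
  - apply seq_NoDup.
Qed.

Lemma in_zrange B x : (- Z.of_nat B <= x <= Z.of_nat B)%Z -> In x (zrange B).
Proof.
  intros H. apply in_map_iff. exists (Z.to_nat (x + Z.of_nat B)). split. lia.
  apply in_seq. lia.
Qed.

Definition zbox B := list_prod (zrange B) (zrange B).
Lemma zbox_NoDup B : NoDup (zbox B).
Proof. apply NoDup_list_prod; apply zrange_NoDup. Qed.

Lemma in_zbox B x y : (- Z.of_nat B <= x <= Z.of_nat B)%Z -> (- Z.of_nat B <= y <= Z.of_nat B)%Z ->
  In (x, y) (zbox B).
Proof. intros. apply in_prod; apply in_zrange; auto. Qed.

Definition cnt (c : nat) (g h : nat -> nat) (N : nat) : nat :=
  cntl (fun p => Nat.eqb (c + g (fst p) + h (snd p)) N) (natbox (S N)).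

Lemma cnt_zero c g h N : (forall m n, c + g m + h n <> N)%nat -> cnt c g h N = 0%nat.
Proof.
  intros H. apply cntl_false. intros [m n]. apply Nat.eqb_neq, H.
Qed.

Lemma cnt_eq c g h N c' g' h' N' :
  (forall m, m <= g m)%nat -> (forall n, n <= h n)%nat ->
  (forall m, m <= g' m)%nat -> (forall n, n <= h' n)%nat ->
  (forall m n, c + g m + h n = N <-> c' + g' m + h' n = N')%nat ->
  cnt c g h N = cnt c' g' h' N'.
Proof.
  intros Hg Hh Hg' Hh' E. unfold cnt.
  apply count_bij with (fun p => p) (fun p => p); try apply natbox_NoDup.
  - intros [m n] H. apply Nat.eqb_eq in H; simpl in H.
    specialize (Hg m); specialize (Hh n). apply in_natbox; lia.
  - intros [m n] H. apply Nat.eqb_eq in H; simpl in H.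
    specialize (Hg' m); specialize (Hh' n). apply in_natbox; lia.
  - intros [m n] H. apply Nat.eqb_eq in H; simpl in *. split; auto.
    apply Nat.eqb_eq, E, H.
  - intros [m n] H. apply Nat.eqb_eq in H; simpl in *. split; auto.
    apply Nat.eqb_eq, E, H.
Qed.

Lemma cnt_Z c g h N (P : Z * Z -> bool) B (f : nat * nat -> Z * Z) (f' : Z * Z -> nat * nat) :
  (forall m, m <= g m)%nat -> (forall n, n <= h n)%nat ->
  (forall x y, P (x, y) = true -> - Z.of_nat B <= x <= Z.of_nat B /\ - Z.of_nat B <= y <= Z.of_nat B)%Z ->
  (forall m n, (c + g m + h n = N)%nat -> P (f (m, n)) = true /\ f' (f (m, n)) = (m, n)) ->
  (forall p, P p = true -> (c + g (fst (f' p)) + h (snd (f' p)) = N)%nat /\ f (f' p) = p) ->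
  cnt c g h N = cntl P (zbox B).
Proof.
  intros Hg Hh HB H1 H2. unfold cnt.
  apply count_bij with f f'; try apply natbox_NoDup; try apply zbox_NoDup.
  - intros [m n] H. apply Nat.eqb_eq in H; simpl in H.
    specialize (Hg m); specialize (Hh n). apply in_natbox; lia.
  - intros [x y] H. destruct (HB x y H). apply in_zbox; auto.
  - intros [m n] H. apply Nat.eqb_eq in H. apply H1, H.
  - intros p H. destruct (H2 p H) as [E1 E2]. split; auto. apply Nat.eqb_eq, E1.
Qed.

End Base.
Import Base.

Module Counting.
Local Open Scope bool_scope.
Local Open Scope Z_scope.


Definition T (m : nat) : nat := Nat.div (m * (m + 1)) 2.

Lemma T2 m : (2 * T m = m * (m + 1))%nat.
Proof.
  unfold T. destruct (Nat.Even_or_Odd m) as [[k ->]|[k ->]].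
  - replace (2 * k * (2 * k + 1))%nat with ((k * (2 * k + 1)) * 2)%nat by lia.
    rewrite Nat.div_mul by lia. lia.
  - replace ((2 * k + 1) * (2 * k + 1 + 1))%nat with (((2 * k + 1) * (k + 1)) * 2)%nat by lia.
    rewrite Nat.div_mul by lia. lia.
Qed.

Lemma TZ m : 2 * Z.of_nat (T m) = Z.of_nat m * (Z.of_nat m + 1).
Proof. pose proof (T2 m). lia. Qed.

Lemma T_ge m : (m <= T m)%nat.
Proof. pose proof (T2 m). nia. Qed.

Ltac bsimpl := repeat (rewrite ?Bool.andb_true_iff, ?Bool.orb_true_iff, ?Z.ltb_lt, ?Z.eqb_eq, ?Nat.eqb_eq in *).

Definition isP (K : Z) (p : Z * Z) : bool :=
  let '(x, y) := p in
  (0 <? x) && (0 <? y) && (x mod 2 =? 1) && (y mod 2 =? 1) && (x * x + 7 * y * y =? K).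

Definition isQ (K : Z) (p : Z * Z) : bool :=
  let '(x, y) := p in
  (x * x + 7 * y * y =? K) &&
  (((x mod 2 =? 1) && (0 <? x) && (y mod 2 =? 0)) || ((x mod 2 =? 0) && (y mod 2 =? 1) && (0 <? y))).

Definition NP K := cntl (isP K) (zbox (Z.to_nat K)).
Definition NQ K := cntl (isQ K) (zbox (Z.to_nat K)).

Lemma norm_bound x y K : x * x + 7 * y * y = K ->
  - Z.of_nat (Z.to_nat K) <= x <= Z.of_nat (Z.to_nat K) /\ - Z.of_nat (Z.to_nat K) <= y <= Z.of_nat (Z.to_nat K).
Proof.
  intros H. assert (A1 : Z.abs x <= x * x) by (destruct (Z.abs_spec x); nia).
  assert (A2 : Z.abs y <= y * y) by (destruct (Z.abs_spec y); nia).
  assert (0 <= x * x) by nia. assert (0 <= y * y) by nia.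
  rewrite Z2Nat.id by lia. lia. Qed.

Lemma isP_bound K x y : isP K (x, y) = true ->
  - Z.of_nat (Z.to_nat K) <= x <= Z.of_nat (Z.to_nat K) /\ - Z.of_nat (Z.to_nat K) <= y <= Z.of_nat (Z.to_nat K).
Proof. simpl; intros; bsimpl. apply norm_bound; tauto. Qed.

Lemma isQ_bound K x y : isQ K (x, y) = true ->
  - Z.of_nat (Z.to_nat K) <= x <= Z.of_nat (Z.to_nat K) /\ - Z.of_nat (Z.to_nat K) <= y <= Z.of_nat (Z.to_nat K).
Proof. simpl; intros; bsimpl. apply norm_bound; tauto. Qed.

Lemma odd_nat x : 0 < x -> x mod 2 = 1 -> x = 2 * Z.of_nat (Z.to_nat ((x - 1) / 2)) + 1.
Proof. intros. Z.div_mod_to_equations. lia. Qed.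

Lemma half_odd m : Z.to_nat ((2 * Z.of_nat m + 1 - 1) / 2) = m.
Proof. Z.div_mod_to_equations. lia. Qed.

Lemma F1 N : cnt 0 T (fun n => 7 * T n)%nat N = NP (8 * Z.of_nat N + 8).
Proof.
  unfold NP. apply cnt_Z with (f := fun p => (2 * Z.of_nat (fst p) + 1, 2 * Z.of_nat (snd p) + 1))
    (f' := fun p => (Z.to_nat ((fst p - 1) / 2), Z.to_nat ((snd p - 1) / 2))).
  - apply T_ge.
  - intros; pose proof (T_ge n); lia.
  - apply isP_bound.
  - intros m n H. unfold isP; cbn [fst snd]. pose proof (TZ m); pose proof (TZ n). split.
    + bsimpl. repeat split; first [Z.div_mod_to_equations; lia | nia].
    + f_equal; Z.div_mod_to_equations; lia.
  - intros [x y] H. unfold isP in *; cbn [fst snd] in *. bsimpl.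
    destruct H as [[[[H1 H2] H3] H4] H5].
    rewrite (odd_nat x) in H5 |- * by lia. rewrite (odd_nat y) in H5 |- * by lia.
    set (m := Z.to_nat ((x - 1) / 2)) in *. set (n := Z.to_nat ((y - 1) / 2)) in *.
    pose proof (TZ m); pose proof (TZ n). clearbody m n. rewrite !half_odd. split. nia. reflexivity.
Qed.

Lemma cnt_Z' c g h N (P : Z * Z -> bool) B (f : nat * nat -> Z * Z) (f' : Z * Z -> nat * nat) :
  (forall m, m <= g m)%nat -> (forall n, n <= h n)%nat ->
  (forall x y, P (x, y) = true -> - Z.of_nat B <= x <= Z.of_nat B /\ - Z.of_nat B <= y <= Z.of_nat B)%Z ->
  (forall m n, (c + g m + h n = N)%nat -> P (f (m, n)) = true /\ f' (f (m, n)) = (m, n)) ->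
  (forall x y, P (x, y) = true -> exists m n, f' (x, y) = (m, n) /\ (c + g m + h n = N)%nat /\ f (m, n) = (x, y)) ->
  cnt c g h N = cntl P (zbox B).
Proof.
  intros Hg Hh HB H1 H2. apply cnt_Z with f f'; auto.
  intros [x y] H. destruct (H2 x y H) as [m [n [E1 [E2 E3]]]]. rewrite E1. simpl. auto.
Qed.

Lemma odd_ex x : 0 < x -> x mod 2 = 1 -> exists a : nat, x = 2 * Z.of_nat a + 1.
Proof. intros. exists (Z.to_nat ((x - 1) / 2)). Z.div_mod_to_equations. lia. Qed.
Lemma even_ex x : 0 <= x -> x mod 2 = 0 -> exists a : nat, x = 2 * Z.of_nat a.
Proof. intros. exists (Z.to_nat (x / 2)). Z.div_mod_to_equations. lia. Qed.
Lemma neven_ex x : x < 0 -> x mod 2 = 0 -> exists a : nat, x = - (2 * (Z.of_nat a + 1)).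
Proof. intros. exists (Z.to_nat (- x / 2 - 1)). Z.div_mod_to_equations. lia. Qed.

Definition Q1 K (p : Z * Z) : bool := let '(x, y) := p in
  (x * x + 7 * y * y =? K) && (x mod 2 =? 1) && (0 <? x) && (y mod 2 =? 0) && (0 <=? y).
Definition Q2 K (p : Z * Z) : bool := let '(x, y) := p in
  (x * x + 7 * y * y =? K) && (x mod 2 =? 1) && (0 <? x) && (y mod 2 =? 0) && (y <? 0).
Definition Q3 K (p : Z * Z) : bool := let '(x, y) := p in
  (x * x + 7 * y * y =? K) && (x mod 2 =? 0) && (y mod 2 =? 1) && (0 <? y) && (0 <=? x).
Definition Q4 K (p : Z * Z) : bool := let '(x, y) := p in
  (x * x + 7 * y * y =? K) && (x mod 2 =? 0) && (y mod 2 =? 1) && (0 <? y) && (x <? 0).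

Ltac bsimpl2 := repeat (rewrite ?Bool.andb_true_iff, ?Bool.orb_true_iff, ?Bool.andb_false_iff, ?Bool.orb_false_iff, ?Z.ltb_lt, ?Z.leb_le, ?Z.eqb_eq, ?Z.ltb_ge, ?Z.leb_gt, ?Z.eqb_neq, ?Nat.eqb_eq in *).

Lemma NQ_split K : NQ K = (cntl (Q1 K) (zbox (Z.to_nat K)) + cntl (Q2 K) (zbox (Z.to_nat K))
   + cntl (Q3 K) (zbox (Z.to_nat K)) + cntl (Q4 K) (zbox (Z.to_nat K)))%nat.
Proof.
  unfold NQ.
  rewrite (cntl_or (isQ K) (fun p => Q1 K p || Q2 K p || Q3 K p) (Q4 K)).
  rewrite (cntl_or (fun p => Q1 K p || Q2 K p || Q3 K p) (fun p => Q1 K p || Q2 K p) (Q3 K)).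
  rewrite (cntl_or (fun p => Q1 K p || Q2 K p) (Q1 K) (Q2 K)).
  reflexivity.
  - reflexivity.
  - intros [x y]; unfold Q1, Q2; apply Bool.not_true_iff_false; intro H; bsimpl2; lia.
  - reflexivity.
  - intros [x y]; unfold Q1, Q2, Q3; apply Bool.not_true_iff_false; intro H; bsimpl2; lia.
  - intros [x y]; unfold isQ, Q1, Q2, Q3, Q4.
    destruct (x * x + 7 * y * y =? K); simpl; auto.
    destruct (Z.eqb_spec (x mod 2) 1), (Z.eqb_spec (x mod 2) 0), (Z.eqb_spec (y mod 2) 1), (Z.eqb_spec (y mod 2) 0),
      (Z.ltb_spec 0 x), (Z.ltb_spec 0 y), (Z.leb_spec 0 x), (Z.leb_spec 0 y), (Z.ltb_spec x 0), (Z.ltb_spec y 0);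
      simpl; auto; lia.
  - intros [x y]; unfold Q1, Q2, Q3, Q4; apply Bool.not_true_iff_false; intro H; bsimpl2; lia.
Qed.

Lemma F2 N : NQ (Z.of_nat N + 1) =
  (cnt 0 (fun a => 8 * T a) (fun b => 28 * (b * b)) N
  + cnt 0 (fun a => 8 * T a) (fun k => 28 * (S k * S k)) N
  + cnt 6 (fun c => 4 * (c * c)) (fun d => 56 * T d) N
  + cnt 6 (fun k => 4 * (S k * S k)) (fun d => 56 * T d) N)%nat.
Proof.
  rewrite NQ_split. f_equal; [f_equal; [f_equal|]|]; symmetry.
  - apply cnt_Z' with (f := fun p => (2 * Z.of_nat (fst p) + 1, 2 * Z.of_nat (snd p)))
      (f' := fun p => (Z.to_nat ((fst p - 1) / 2), Z.to_nat (snd p / 2))).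
    + intros m; pose proof (T_ge m); lia.
    + intros; nia.
    + intros x y H; unfold Q1 in H; bsimpl2; apply norm_bound; tauto.
    + intros m n H. pose proof (TZ m). unfold Q1; cbn [fst snd]. split.
      * bsimpl2. repeat split; first [Z.div_mod_to_equations; lia | nia].
      * f_equal; Z.div_mod_to_equations; lia.
    + intros x y H. unfold Q1 in H. bsimpl2. destruct H as [[[[H1 H2] H3] H4] H5].
      destruct (odd_ex x) as [a ->]; try lia. destruct (even_ex y) as [b ->]; try lia.
      exists a, b. cbn [fst snd]. pose proof (TZ a). split; [f_equal; Z.div_mod_to_equations; lia|].
      split; [nia | reflexivity].
  - apply cnt_Z' with (f := fun p => (2 * Z.of_nat (fst p) + 1, - (2 * (Z.of_nat (snd p) + 1))))
      (f' := fun p => (Z.to_nat ((fst p - 1) / 2), Z.to_nat (- snd p / 2 - 1))).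
    + intros m; pose proof (T_ge m); lia.
    + intros; nia.
    + intros x y H; unfold Q2 in H; bsimpl2; apply norm_bound; tauto.
    + intros m n H. pose proof (TZ m). unfold Q2; cbn [fst snd]. split.
      * bsimpl2. repeat split; first [Z.div_mod_to_equations; lia | nia].
      * f_equal; Z.div_mod_to_equations; lia.
    + intros x y H. unfold Q2 in H. bsimpl2. destruct H as [[[[H1 H2] H3] H4] H5].
      destruct (odd_ex x) as [a ->]; try lia. destruct (neven_ex y) as [b ->]; try lia.
      exists a, b. cbn [fst snd]. pose proof (TZ a). split; [f_equal; Z.div_mod_to_equations; lia|].
      split; [nia | reflexivity].
  - apply cnt_Z' with (f := fun p => (2 * Z.of_nat (fst p), 2 * Z.of_nat (snd p) + 1))
      (f' := fun p => (Z.to_nat (fst p / 2), Z.to_nat ((snd p - 1) / 2))).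
    + intros; nia.
    + intros m; pose proof (T_ge m); lia.
    + intros x y H; unfold Q3 in H; bsimpl2; apply norm_bound; tauto.
    + intros m n H. pose proof (TZ n). unfold Q3; cbn [fst snd]. split.
      * bsimpl2. repeat split; first [Z.div_mod_to_equations; lia | nia].
      * f_equal; Z.div_mod_to_equations; lia.
    + intros x y H. unfold Q3 in H. bsimpl2. destruct H as [[[[H1 H2] H3] H4] H5].
      destruct (even_ex x) as [a ->]; try lia. destruct (odd_ex y) as [b ->]; try lia.
      exists a, b. cbn [fst snd]. pose proof (TZ b). split; [f_equal; Z.div_mod_to_equations; lia|].
      split; [nia | reflexivity].
  - apply cnt_Z' with (f := fun p => (- (2 * (Z.of_nat (fst p) + 1)), 2 * Z.of_nat (snd p) + 1))
      (f' := fun p => (Z.to_nat (- fst p / 2 - 1), Z.to_nat ((snd p - 1) / 2))).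
    + intros; nia.
    + intros m; pose proof (T_ge m); lia.
    + intros x y H; unfold Q4 in H; bsimpl2; apply norm_bound; tauto.
    + intros m n H. pose proof (TZ n). unfold Q4; cbn [fst snd]. split.
      * bsimpl2. repeat split; first [Z.div_mod_to_equations; lia | nia].
      * f_equal; Z.div_mod_to_equations; lia.
    + intros x y H. unfold Q4 in H. bsimpl2. destruct H as [[[[H1 H2] H3] H4] H5].
      destruct (neven_ex x) as [a ->]; try lia. destruct (odd_ex y) as [b ->]; try lia.
      exists a, b. cbn [fst snd]. pose proof (TZ b). split; [f_equal; Z.div_mod_to_equations; lia|].
      split; [nia | reflexivity].
Qed.

Lemma F4 N : cnt 3 (fun a => 4 * T a)%nat (fun b => 28 * T b)%nat N = NP (2 * Z.of_nat N + 2).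
Proof.
  unfold NP. apply cnt_Z' with (f := fun p => (2 * Z.of_nat (fst p) + 1, 2 * Z.of_nat (snd p) + 1))
    (f' := fun p => (Z.to_nat ((fst p - 1) / 2), Z.to_nat ((snd p - 1) / 2))).
  - intros m; pose proof (T_ge m); lia.
  - intros m; pose proof (T_ge m); lia.
  - apply isP_bound.
  - intros m n H. pose proof (TZ m); pose proof (TZ n). unfold isP; cbn [fst snd]. split.
    + bsimpl. repeat split; first [Z.div_mod_to_equations; lia | nia].
    + f_equal; Z.div_mod_to_equations; lia.
  - intros x y H. unfold isP in H. bsimpl2. destruct H as [[[[H1 H2] H3] H4] H5].
    destruct (odd_ex x) as [a ->]; try lia. destruct (odd_ex y) as [b ->]; try lia.
    exists a, b. cbn [fst snd]. pose proof (TZ a); pose proof (TZ b).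
    split; [f_equal; Z.div_mod_to_equations; lia|]. split; [nia | reflexivity].
Qed.

Lemma sq_ge m : (m <= m * m)%nat.
Proof. nia. Qed.

Ltac ge_tac := intros; match goal with |- (?m <= _)%nat => pose proof (T_ge m); pose proof (sq_ge m); pose proof (sq_ge (S m)); lia end.

Lemma F3a K : (cnt 1 (fun a => 16 * T a) (fun b => 56 * (b * b)) (2 * K + 1)
  = cnt 0 (fun a => 8 * T a) (fun b => 28 * (b * b)) K)%nat.
Proof. apply cnt_eq; try ge_tac. intros; lia. Qed.
Lemma F3b K : (cnt 1 (fun a => 16 * T a) (fun k => 56 * (S k * S k)) (2 * K + 1)
  = cnt 0 (fun a => 8 * T a) (fun k => 28 * (S k * S k)) K)%nat.
Proof. apply cnt_eq; try ge_tac. intros; lia. Qed.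
Lemma F3c K : (cnt 13 (fun c => 8 * (c * c)) (fun d => 112 * T d) (2 * K + 1)
  = cnt 6 (fun c => 4 * (c * c)) (fun d => 56 * T d) K)%nat.
Proof. apply cnt_eq; try ge_tac. intros; lia. Qed.
Lemma F3d K : (cnt 13 (fun k => 8 * (S k * S k)) (fun d => 112 * T d) (2 * K + 1)
  = cnt 6 (fun k => 4 * (S k * S k)) (fun d => 56 * T d) K)%nat.
Proof. apply cnt_eq; try ge_tac. intros; lia. Qed.

Lemma odd_sq x : x mod 2 = 1 -> exists u, x * x = 8 * u + 1.
Proof.
  intros H. assert (exists q, x = 4 * q + 1 \/ x = 4 * q + 3) as [q [E|E]].
  { exists (x / 4). Z.div_mod_to_equations; lia. }
  - exists (2 * q * q + q). rewrite E. ring.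
  - exists (2 * q * q + 3 * q + 1). rewrite E. ring.
Qed.

Lemma NP_zero M : M mod 8 <> 0 -> NP M = 0%nat.
Proof.
  intros HM. apply cntl_false. intros [x y]. unfold isP.
  apply Bool.not_true_iff_false; intro H; cbv beta iota in H; bsimpl2. destruct H as [[[[H1 H2] H3] H4] H5].
  destruct (odd_sq x H3) as [u Hu]. destruct (odd_sq y H4) as [v Hv].
  apply HM. rewrite <- H5. replace (x * x + 7 * y * y) with (8 * (u + 7 * v + 1)).
  rewrite Z.mul_comm, Z_mod_mult. reflexivity. rewrite <- Z.mul_assoc, Hu, Hv. ring.
Qed.

Lemma abs_sq x : Z.abs x * Z.abs x = x * x.
Proof. destruct (Z.abs_spec x) as [[_ ->]|[_ ->]]; ring. Qed.

Lemma norm_rel x y X Y : 2 * x = X + 7 * Y -> 2 * y = X - Y -> x * x + 7 * y * y = 2 * (X * X + 7 * Y * Y).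
Proof. intros. nia. Qed.

Ltac dtest := repeat match goal with
  | |- context [Z.eqb ?a ?b] => destruct (Z.eqb_spec a b)
  | |- context [Z.ltb ?a ?b] => destruct (Z.ltb_spec a b) end.

Definition isR (J : Z) (p : Z * Z) : bool := let '(X, Y) := p in
  (X * X + 7 * Y * Y =? 4 * J) && (0 <? X + 7 * Y) && ((X - Y) mod 4 =? 2).

Definition f1 (p : Z * Z) : Z * Z := let '(x, y) := p in
  let y' := if (x - y) mod 4 =? 0 then y else - y in ((x + 7 * y') / 4, (x - y') / 4).
Definition g1 (p : Z * Z) : Z * Z := let '(X, Y) := p in ((X + 7 * Y) / 2, Z.abs ((X - Y) / 2)).

Lemma isR_bound J X Y : isR J (X, Y) = true ->
  - Z.of_nat (Z.to_nat (4 * J)) <= X <= Z.of_nat (Z.to_nat (4 * J)) /\ - Z.of_nat (Z.to_nat (4 * J)) <= Y <= Z.of_nat (Z.to_nat (4 * J)).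
Proof. unfold isR; intros; bsimpl. apply norm_bound; tauto. Qed.

Lemma bij1 J : NP (8 * J) = cntl (isR J) (zbox (Z.to_nat (4 * J))).
Proof.
  unfold NP. apply count_bij with f1 g1; try apply zbox_NoDup.
  - intros [x y] H. destruct (isP_bound _ _ _ H). apply in_zbox; auto.
  - intros [x y] H. destruct (isR_bound _ _ _ H). apply in_zbox; auto.
  - intros [x y] H. unfold isP in H. bsimpl2. destruct H as [[[[H1 H2] H3] H4] H5].
    set (y' := if (x - y) mod 4 =? 0 then y else - y).
    assert (Hy' : y' * y' = y * y /\ (x - y') mod 4 = 0 /\ y' mod 2 = 1 /\ Z.abs y' = y).
    { unfold y'; dtest; repeat split; try lia; Z.div_mod_to_equations; lia. }
    destruct Hy' as [Hy1 [Hy2 [Hy3 Hy4]]].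
    assert (Ey : (if (x - y) mod 4 =? 0 then y else - y) = y') by reflexivity.
    clearbody y'.
    assert (exists X, x + 7 * y' = 4 * X) as [X HX] by (exists ((x + 7 * y') / 4); Z.div_mod_to_equations; lia).
    assert (exists Y, x - y' = 4 * Y) as [Y HY] by (exists ((x - y') / 4); Z.div_mod_to_equations; lia).
    assert (E : f1 (x, y) = (X, Y)).
    { unfold f1. rewrite Ey. f_equal; Z.div_mod_to_equations; lia. }
    rewrite E.
    assert (N : x * x + 7 * y' * y' = 2 * (X * X + 7 * Y * Y)) by (apply norm_rel; lia).
    split.
    + unfold isR. bsimpl2. repeat split; try lia. Z.div_mod_to_equations; lia.
    + unfold g1. f_equal. Z.div_mod_to_equations; lia.
      replace ((X - Y) / 2) with y'. lia. Z.div_mod_to_equations; lia.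
  - intros [X Y] H. unfold isR in H. bsimpl2. destruct H as [[H1 H2] H3].
    assert (exists x, X + 7 * Y = 2 * x) as [x Hx] by (exists ((X + 7 * Y) / 2); Z.div_mod_to_equations; lia).
    assert (exists y', X - Y = 2 * y') as [y' Hy'] by (exists ((X - Y) / 2); Z.div_mod_to_equations; lia).
    assert (E : g1 (X, Y) = (x, Z.abs y')).
    { unfold g1. f_equal; [|f_equal]; Z.div_mod_to_equations; lia. }
    rewrite E.
    assert (N : x * x + 7 * y' * y' = 2 * (X * X + 7 * Y * Y)) by (apply norm_rel; lia).
    pose proof (abs_sq y').
    split.
    + unfold isP. bsimpl2. repeat split; try lia; Z.div_mod_to_equations; lia.
    + unfold f1. destruct (Z.abs_spec y') as [[A1 A2]|[A1 A2]]; rewrite A2; dtest;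
      f_equal; Z.div_mod_to_equations; lia.
Qed.

Definition isRe J (p : Z * Z) : bool := isR J p && (fst p mod 2 =? 0).
Definition isRo J (p : Z * Z) : bool := isR J p && (fst p mod 2 =? 1).

Lemma R_split J : cntl (isR J) (zbox (Z.to_nat (4 * J))) =
  (cntl (isRe J) (zbox (Z.to_nat (4 * J))) + cntl (isRo J) (zbox (Z.to_nat (4 * J))))%nat.
Proof.
  apply cntl_or.
  - intros [X Y]. unfold isRe, isRo. cbn [fst].
    destruct (isR J (X, Y)); simpl; auto.
    dtest; simpl; auto. Z.div_mod_to_equations; lia.
  - intros [X Y]. unfold isRe, isRo. cbn [fst].
    destruct (isR J (X, Y)); simpl; auto. dtest; simpl; auto; lia.
Qed.

Definition nq (p : Z * Z) : Z * Z := let '(u, v) := p in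
  if (if u mod 2 =? 1 then 0 <? u else 0 <? v) then (u, v) else (- u, - v).
Definition f2 (p : Z * Z) : Z * Z := let '(X, Y) := p in nq (X / 2, Y / 2).
Definition g2 (p : Z * Z) : Z * Z := let '(u, v) := p in
  if 0 <? u + 7 * v then (2 * u, 2 * v) else (- (2 * u), - (2 * v)).

Lemma nq_Q J u v : isQ J (u, v) = true -> nq (u, v) = (u, v) /\ nq (- u, - v) = (u, v).
Proof.
  unfold isQ, nq. intros H; bsimpl2. destruct H as [_ [[[A B] C]|[[A B] C]]].
  - rewrite A, (proj2 (Z.ltb_lt _ _) B).
    assert (A' : (- u) mod 2 = 1) by (Z.div_mod_to_equations; lia).
    rewrite A', (proj2 (Z.ltb_ge 0 (- u))) by lia. simpl. split; f_equal; lia.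
  - assert (A1 : u mod 2 =? 1 = false) by (apply Z.eqb_neq; lia).
    assert (A' : (- u) mod 2 =? 1 = false) by (apply Z.eqb_neq; Z.div_mod_to_equations; lia).
    rewrite A1, A', (proj2 (Z.ltb_lt _ _) C), (proj2 (Z.ltb_ge 0 (- v))) by lia. simpl. split; f_equal; lia.
Qed.

Lemma nq_spec J u v : u * u + 7 * v * v = J -> (u - v) mod 2 = 1 ->
  isQ J (nq (u, v)) = true /\ (nq (u, v) = (u, v) \/ nq (u, v) = (- u, - v)).
Proof.
  intros N P. unfold nq.
  assert (u mod 2 = 1 /\ v mod 2 = 0 \/ u mod 2 = 0 /\ v mod 2 = 1) as [[A B]|[A B]]
    by (Z.div_mod_to_equations; lia).
  - rewrite A, Z.eqb_refl. destruct (Z.ltb_spec 0 u).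
    + split; auto. unfold isQ. bsimpl2. split. lia. left. lia.
    + split; auto. unfold isQ. bsimpl2. split. lia. left.
      assert (u <> 0) by (intro; subst; discriminate).
      repeat split; try lia; Z.div_mod_to_equations; lia.
  - assert (A1 : u mod 2 =? 1 = false) by (apply Z.eqb_neq; lia). rewrite A1.
    destruct (Z.ltb_spec 0 v).
    + split; auto. unfold isQ. bsimpl2. split. lia. right. lia.
    + split; auto. unfold isQ. bsimpl2. split. lia. right.
      assert (v <> 0) by (intro; subst; discriminate).
      repeat split; try lia; Z.div_mod_to_equations; lia.
Qed.

Lemma bij2 J : cntl (isRe J) (zbox (Z.to_nat (4 * J))) = NQ J.
Proof.
  unfold NQ. apply count_bij with f2 g2; try apply zbox_NoDup.
  - intros [X Y] H. unfold isRe in H. bsimpl2. destruct H as [H _].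
    destruct (isR_bound _ _ _ H). apply in_zbox; auto.
  - intros [x y] H. destruct (isQ_bound _ _ _ H). apply in_zbox; auto.
  - intros [X Y] H. unfold isRe, isR in H. cbn [fst] in H. bsimpl2.
    destruct H as [[[H1 H2] H3] H4].
    assert (exists u, X = 2 * u) as [u ->] by (exists (X / 2); Z.div_mod_to_equations; lia).
    assert (exists v, Y = 2 * v) as [v ->] by (exists (Y / 2); Z.div_mod_to_equations; lia).
    assert (E : f2 (2 * u, 2 * v) = nq (u, v)).
    { unfold f2. f_equal; f_equal; Z.div_mod_to_equations; lia. }
    rewrite E. assert (N : u * u + 7 * v * v = J) by lia.
    assert (P : (u - v) mod 2 = 1) by (Z.div_mod_to_equations; lia).
    destruct (nq_spec J u v N P) as [Q [R|R]]; rewrite R in Q |- *; split; auto; unfold g2; cbv beta iota.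
    + rewrite (proj2 (Z.ltb_lt _ _)) by lia. reflexivity.
    + rewrite (proj2 (Z.ltb_ge _ _)) by lia. f_equal; lia.
  - intros [u v] H. pose proof (nq_Q _ _ _ H) as [E1 E2]. unfold isQ in H. bsimpl2. destruct H as [H1 H2].
    assert (Hp : (u - v) mod 2 = 1) by (Z.div_mod_to_equations; lia).
    assert (u + 7 * v <> 0) by (intro; Z.div_mod_to_equations; lia).
    unfold g2. destruct (Z.ltb_spec 0 (u + 7 * v)).
    + split.
      * unfold isRe, isR. cbn [fst]. bsimpl2. repeat split; try lia; Z.div_mod_to_equations; lia.
      * unfold f2. replace (2 * u / 2) with u by (Z.div_mod_to_equations; lia).
        replace (2 * v / 2) with v by (Z.div_mod_to_equations; lia). auto.
    + split.
      * unfold isRe, isR. cbn [fst]. bsimpl2. repeat split; try lia; Z.div_mod_to_equations; lia.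
      * unfold f2. replace (- (2 * u) / 2) with (- u) by (Z.div_mod_to_equations; lia).
        replace (- (2 * v) / 2) with (- v) by (Z.div_mod_to_equations; lia). auto.
Qed.

Definition f3 (p : Z * Z) : Z * Z := let '(X, Y) := p in (Z.abs X, Z.abs Y).
Definition g3 (p : Z * Z) : Z * Z := let '(a, b) := p in
  if (a - b) mod 4 =? 0 then (if 0 <? a - 7 * b then (a, - b) else (- a, b))
  else (if 0 <? a + 7 * b then (a, b) else (- a, - b)).

Lemma bij3 J : cntl (isRo J) (zbox (Z.to_nat (4 * J))) = NP (4 * J).
Proof.
  unfold NP. apply count_bij with f3 g3; try apply zbox_NoDup.
  - intros [X Y] H. unfold isRo in H. bsimpl2. destruct H as [H _].
    destruct (isR_bound _ _ _ H). apply in_zbox; auto.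
  - intros [x y] H. destruct (isP_bound _ _ _ H). apply in_zbox; auto.
  - intros [X Y] H. unfold isRo, isR in H. cbn [fst] in H. bsimpl2.
    destruct H as [[[H1 H2] H3] H4].
    assert (HY : Y mod 2 = 1) by (Z.div_mod_to_equations; lia).
    pose proof (abs_sq X); pose proof (abs_sq Y).
    unfold f3; cbv beta iota. split.
    + unfold isP. bsimpl2. repeat split; try lia; Z.div_mod_to_equations; lia.
    + clear H H0 H1. unfold g3. destruct (Z.abs_spec X) as [[A1 A2]|[A1 A2]]; destruct (Z.abs_spec Y) as [[B1 B2]|[B1 B2]];
      rewrite A2, B2.
      * rewrite (proj2 (Z.eqb_neq _ _)) by (Z.div_mod_to_equations; lia).
        rewrite (proj2 (Z.ltb_lt _ _)) by lia. reflexivity.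
      * rewrite (proj2 (Z.eqb_eq _ _)) by (Z.div_mod_to_equations; lia).
        rewrite (proj2 (Z.ltb_lt _ _)) by lia. f_equal; lia.
      * rewrite (proj2 (Z.eqb_eq _ _)) by (Z.div_mod_to_equations; lia).
        rewrite (proj2 (Z.ltb_ge _ _)) by lia. f_equal; lia.
      * rewrite (proj2 (Z.eqb_neq _ _)) by (Z.div_mod_to_equations; lia).
        rewrite (proj2 (Z.ltb_ge _ _)) by lia. f_equal; lia.
  - intros [a b] H. unfold isP in H. bsimpl2. destruct H as [[[[H1 H2] H3] H4] H5].
    unfold g3; cbv beta iota.
    destruct (Z.eqb_spec ((a - b) mod 4) 0) as [C|C].
    + destruct (Z.ltb_spec 0 (a - 7 * b)).
      * split; [unfold isRo, isR; cbn [fst]; bsimpl2; repeat split; try lia; Z.div_mod_to_equations; lia|].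
        unfold f3; f_equal; lia.
      * assert (a - 7 * b <> 0) by (intro; Z.div_mod_to_equations; lia).
        split; [unfold isRo, isR; cbn [fst]; bsimpl2; repeat split; try lia; Z.div_mod_to_equations; lia|].
        unfold f3; f_equal; lia.
    + destruct (Z.ltb_spec 0 (a + 7 * b)).
      * split; [unfold isRo, isR; cbn [fst]; bsimpl2; repeat split; try lia; Z.div_mod_to_equations; lia|].
        unfold f3; f_equal; lia.
      * lia.
Qed.

Lemma F5 J : 0 <= J -> NP (8 * J) = (NQ J + NP (4 * J))%nat.
Proof.
  intros HJ. rewrite bij1, R_split, bij2, bij3. reflexivity.
Qed.

Lemma count_identity N :
  cnt 0 T (fun n => 7 * T n)%nat N =
  (cnt 0 (fun a => 8 * T a) (fun b => 28 * (b * b)) N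
  + cnt 0 (fun a => 8 * T a) (fun k => 28 * (S k * S k)) N
  + cnt 6 (fun c => 4 * (c * c)) (fun d => 56 * T d) N
  + cnt 6 (fun k => 4 * (S k * S k)) (fun d => 56 * T d) N
  + cnt 1 (fun a => 16 * T a) (fun b => 56 * (b * b)) N
  + cnt 1 (fun a => 16 * T a) (fun k => 56 * (S k * S k)) N
  + cnt 3 (fun a => 4 * T a) (fun b => 28 * T b) N
  + cnt 13 (fun c => 8 * (c * c)) (fun d => 112 * T d) N
  + cnt 13 (fun k => 8 * (S k * S k)) (fun d => 112 * T d) N)%nat.
Proof.
  rewrite F1, F4.
  replace (8 * Z.of_nat N + 8) with (8 * (Z.of_nat N + 1)) by ring.
  rewrite F5 by lia. rewrite F2.
  destruct (Nat.Even_or_Odd N) as [[K ->]|[K ->]].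
  - rewrite (NP_zero (4 * (Z.of_nat (2 * K) + 1))) by (Z.div_mod_to_equations; lia).
    rewrite (NP_zero (2 * Z.of_nat (2 * K) + 2)) by (Z.div_mod_to_equations; lia).
    rewrite !(cnt_zero 1), !(cnt_zero 13); intros; lia.
  - replace (4 * (Z.of_nat (2 * K + 1) + 1)) with (8 * (Z.of_nat K + 1)) by lia.
    rewrite F5 by lia. rewrite F2, F3a, F3b, F3c, F3d.
    replace (2 * Z.of_nat (2 * K + 1) + 2) with (4 * (Z.of_nat K + 1)) by lia. lia.
Qed.

End Counting.
Import Counting.

Open Scope C_scope.


Fixpoint lsumC {A} (f : A -> C) (l : list A) : C :=
  match l with [] => 0 | x :: l' => f x + lsumC f l' end.
Fixpoint lsumR {A} (f : A -> R) (l : list A) : R :=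
  match l with [] => 0%R | x :: l' => (f x + lsumR f l')%R end.

Definition ps (a : nat -> C) (K : nat) : C := lsumC a (seq 0 K).

Definition cv (u : nat -> C) (l : C) : Prop :=
  forall eps : R, (eps > 0)%R -> exists N0, forall n, (n >= N0)%nat -> (Cmod (u n - l) < eps)%R.

Lemma lsumC_app {A} f (l1 l2 : list A) : lsumC f (l1 ++ l2) = lsumC f l1 + lsumC f l2.
Proof. induction l1; simpl. ring. rewrite IHl1. ring. Qed.
Lemma lsumR_app {A} f (l1 l2 : list A) : lsumR f (l1 ++ l2) = (lsumR f l1 + lsumR f l2)%R.
Proof. induction l1; simpl. ring. rewrite IHl1. ring. Qed.
Lemma lsumC_map {A B} f (g : A -> B) l : lsumC f (map g l) = lsumC (fun x => f (g x)) l.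
Proof. induction l; simpl; auto. rewrite IHl; auto. Qed.
Lemma lsumR_map {A B} f (g : A -> B) l : lsumR f (map g l) = lsumR (fun x => f (g x)) l.
Proof. induction l; simpl; auto. rewrite IHl; auto. Qed.
Lemma lsumC_plus {A} f g (l : list A) : lsumC (fun x => f x + g x) l = lsumC f l + lsumC g l.
Proof. induction l; simpl. ring. rewrite IHl. ring. Qed.
Lemma lsumC_minus {A} f g (l : list A) : lsumC (fun x => f x - g x) l = lsumC f l - lsumC g l.
Proof. induction l; simpl. ring. rewrite IHl. ring. Qed.
Lemma lsumC_scal {A} c f (l : list A) : lsumC (fun x => c * f x) l = c * lsumC f l.
Proof. induction l; simpl. ring. rewrite IHl. ring. Qed.
Lemma lsumR_scal {A} c f (l : list A) : lsumR (fun x => c * f x)%R l = (c * lsumR f l)%R.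
Proof. induction l; simpl. ring. rewrite IHl. ring. Qed.
Lemma lsumC_ext {A} f g (l : list A) : (forall x, In x l -> f x = g x) -> lsumC f l = lsumC g l.
Proof. induction l; simpl; intros H; auto. rewrite H, IHl; auto. Qed.
Lemma lsumR_le {A} f g (l : list A) : (forall x, In x l -> f x <= g x)%R -> (lsumR f l <= lsumR g l)%R.
Proof. induction l; simpl; intros H. lra. pose proof (H a (or_introl eq_refl)). pose proof (IHl (fun x Hx => H x (or_intror Hx))). lra. Qed.
Lemma lsumR_ge0 {A} f (l : list A) : (forall x, In x l -> 0 <= f x)%R -> (0 <= lsumR f l)%R.
Proof. intros H. apply Rle_trans with (lsumR (fun _ => 0%R) l). clear H; induction l; simpl; lra. apply lsumR_le; auto. Qed.
Lemma Cmod_lsum {A} f (l : list A) : (Cmod (lsumC f l) <= lsumR (fun x => Cmod (f x)) l)%R.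
Proof. induction l; simpl. rewrite Cmod_0; lra. eapply Rle_trans. apply Cmod_triangle. lra. Qed.

Lemma lsumC_prod {A B} (f : A -> C) (g : B -> C) l1 l2 :
  lsumC f l1 * lsumC g l2 = lsumC (fun p => f (fst p) * g (snd p)) (list_prod l1 l2).
Proof.
  induction l1; simpl. ring. rewrite lsumC_app, <- IHl1, lsumC_map. simpl.
  rewrite lsumC_scal. ring.
Qed.
Lemma lsumR_prod {A B} (f : A -> R) (g : B -> R) l1 l2 :
  (lsumR f l1 * lsumR g l2)%R = lsumR (fun p => f (fst p) * g (snd p))%R (list_prod l1 l2).
Proof.
  induction l1; simpl. ring. rewrite lsumR_app, <- IHl1, lsumR_map. simpl.
  rewrite lsumR_scal. ring.
Qed.

Lemma Re_lsum {A} f (l : list A) : Re (lsumC f l) = lsumR (fun x => Re (f x)) l.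
Proof. induction l; simpl; auto. rewrite <- IHl. reflexivity. Qed.
Lemma Im_lsum {A} f (l : list A) : Im (lsumC f l) = lsumR (fun x => Im (f x)) l.
Proof. induction l; simpl; auto. rewrite <- IHl. reflexivity. Qed.

Lemma sum_f_R0_lsum (f : nat -> R) n : sum_f_R0 f n = lsumR f (seq 0 (S n)).
Proof.
  induction n. simpl. ring.
  rewrite (seq_S (S n)), lsumR_app. simpl. rewrite IHn. simpl. ring.
Qed.

Lemma im_le_Cmod c : (Rabs (Im c) <= Cmod c)%R.
Proof.
  destruct c as [x y]. unfold Cmod; simpl. rewrite <- sqrt_Rsqr_abs. apply sqrt_le_1_alt.
  unfold Rsqr. nra.
Qed.

Lemma Cmod_le_ReIm c : (Cmod c <= Rabs (Re c) + Rabs (Im c))%R.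
Proof.
  destruct c as [x y]. unfold Cmod; simpl.
  rewrite <- (sqrt_square (Rabs x + Rabs y)) by (pose proof (Rabs_pos x); pose proof (Rabs_pos y); lra).
  apply sqrt_le_1_alt.
  pose proof (Rabs_pos x); pose proof (Rabs_pos y).
  rewrite <- (Rabs_sqr x) at 1 2 || idtac.
  replace (x * (x * 1) + y * (y * 1))%R with (Rabs x * Rabs x + Rabs y * Rabs y)%R.
  nra. rewrite <- !Rabs_mult. rewrite !Rabs_right by nra. ring.
Qed.

Lemma L1 a l : cv (ps a) l -> CSeries a = l.
Proof.
  intros H. unfold CSeries. destruct l as [x y].
  f_equal; apply is_series_unique; apply is_series_Reals; intros eps Heps;
  destruct (H eps Heps) as [N0 HN]; exists N0; intros n Hn; unfold R_dist;
  rewrite sum_f_R0_lsum; specialize (HN (S n) ltac:(lia)); unfold ps in HN.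
  - rewrite <- Re_lsum. eapply Rle_lt_trans; [|apply HN].
    replace (Re (lsumC a (seq 0 (S n))) - x)%R with (Re (lsumC a (seq 0 (S n)) - (x, y))) by reflexivity.
    apply re_le_Cmod.
  - rewrite <- Im_lsum. eapply Rle_lt_trans; [|apply HN].
    replace (Im (lsumC a (seq 0 (S n))) - y)%R with (Im (lsumC a (seq 0 (S n)) - (x, y))) by reflexivity.
    apply im_le_Cmod.
Qed.

Lemma Lex a b : (forall n, Cmod (a n) <= b n)%R -> ex_series b -> cv (ps a) (CSeries a).
Proof.
  intros Hb Eb.
  assert (E1 : ex_series (fun n => Re (a n))).
  { apply (@ex_series_le R_AbsRing R_CompleteNormedModule _ b); auto. intros n.
    change (norm (Re (a n))) with (Rabs (Re (a n))). eapply Rle_trans; [|apply Hb]. apply re_le_Cmod. }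
  assert (E2 : ex_series (fun n => Im (a n))).
  { apply (@ex_series_le R_AbsRing R_CompleteNormedModule _ b); auto. intros n.
    change (norm (Im (a n))) with (Rabs (Im (a n))). eapply Rle_trans; [|apply Hb]. apply im_le_Cmod. }
  apply Series_correct, is_series_Reals in E1. apply Series_correct, is_series_Reals in E2.
  intros eps Heps.
  destruct (E1 (eps / 2)%R ltac:(lra)) as [N1 H1]. destruct (E2 (eps / 2)%R ltac:(lra)) as [N2 H2].
  exists (S (N1 + N2)). intros n Hn. destruct n as [|n]. lia.
  specialize (H1 n ltac:(lia)). specialize (H2 n ltac:(lia)).
  unfold R_dist in *. rewrite sum_f_R0_lsum in H1, H2.
  eapply Rle_lt_trans. apply Cmod_le_ReIm. unfold ps, CSeries.
  replace (Re (lsumC a (seq 0 (S n)) - (Series (fun n0 : nat => Re (a n0)), Series (fun n0 : nat => Im (a n0)))))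
    with (lsumR (fun n => Re (a n)) (seq 0 (S n)) - Series (fun n0 : nat => Re (a n0)))%R
    by (rewrite <- Re_lsum; reflexivity).
  replace (Im (lsumC a (seq 0 (S n)) - (Series (fun n0 : nat => Re (a n0)), Series (fun n0 : nat => Im (a n0)))))
    with (lsumR (fun n => Im (a n)) (seq 0 (S n)) - Series (fun n0 : nat => Im (a n0)))%R
    by (rewrite <- Im_lsum; reflexivity).
  lra.
Qed.

Lemma lsumC_zero {A} (l : list A) : lsumC (fun _ => 0) l = 0.
Proof. induction l; simpl; auto. rewrite IHl. ring. Qed.

Lemma sum_ind_pow (z : C) (E K : nat) :
  lsumC (fun N => (if Nat.eqb E N then 1 else 0) * z ^ N) (seq 0 K) = if Nat.ltb E K then z ^ E else 0.
Proof.
  induction K. simpl. destruct E; reflexivity.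
  rewrite seq_S, lsumC_app, IHK. simpl.
  destruct (Nat.eqb_spec E K) as [->|NE]; simpl.
  - rewrite (proj2 (Nat.ltb_ge K K)) by lia. rewrite (proj2 (Nat.ltb_lt K (S K))) by lia. clear IHK. ring.
  - destruct (Nat.ltb_spec E K); destruct (Nat.ltb_spec E (S K)); try lia; ring.
Qed.

Lemma cntl_cons {A} P (x : A) l : cntl P (x :: l) = ((if P x then 1 else 0) + cntl P l)%nat.
Proof. unfold cntl; simpl. destruct (P x); reflexivity. Qed.

Lemma group_exp {A} (e : A -> nat) (L : list A) (K : nat) (z : C) :
  lsumC (fun N => RtoC (INR (cntl (fun p => Nat.eqb (e p) N) L)) * z ^ N) (seq 0 K)
  = lsumC (fun p => if Nat.ltb (e p) K then z ^ (e p) else 0) L.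
Proof.
  induction L as [|x L IH]; simpl.
  - transitivity (lsumC (fun _ : nat => 0) (seq 0 K)); [|apply lsumC_zero]. apply lsumC_ext. intros. unfold cntl; simpl. ring.
  - rewrite <- sum_ind_pow, <- IH, <- lsumC_plus. apply lsumC_ext. intros N _.
    rewrite cntl_cons, plus_INR, RtoC_plus. destruct (Nat.eqb (e x) N).
    + change (INR 1) with 1%R. ring.
    + change (INR 0) with 0%R. ring.
Qed.

Section DS.
Variables (z : C) (c : nat) (g h : nat -> nat).
Hypothesis (Hz : (Cmod z < 1)%R) (Hg : forall m, (m <= g m)%nat) (Hh : forall n, (n <= h n)%nat).

Let e (p : nat * nat) : nat := (c + g (fst p) + h (snd p))%nat.

Lemma cnt_box N K : (N < K)%nat -> cnt c g h N = cntl (fun p => Nat.eqb (e p) N) (natbox K).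
Proof.
  intros HK. unfold cnt. apply count_bij with (fun p => p) (fun p => p); try apply natbox_NoDup.
  - intros [m n] H. apply Nat.eqb_eq in H; simpl in H.
    specialize (Hg m); specialize (Hh n). apply in_natbox; lia.
  - intros [m n] H. apply Nat.eqb_eq in H; unfold e in H; simpl in H.
    specialize (Hg m); specialize (Hh n). apply in_natbox; lia.
  - intros p H. split; auto.
  - intros p H. split; auto.
Qed.

Definition dco (N : nat) : C := RtoC (INR (cnt c g h N)) * z ^ N.

Lemma ps_d K : ps dco K = lsumC (fun p => if Nat.ltb (e p) K then z ^ (e p) else 0) (natbox K).
Proof.
  rewrite <- group_exp. unfold ps, dco. apply lsumC_ext. intros N HN. apply in_seq in HN.
  rewrite (cnt_box N K) by lia. reflexivity.
Qed.

Lemma ps_ab K : z ^ c * ps (fun m => z ^ g m) K * ps (fun n => z ^ h n) K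
  = lsumC (fun p => z ^ (e p)) (natbox K).
Proof.
  unfold ps, natbox. rewrite <- Cmult_assoc, lsumC_prod, <- lsumC_scal. apply lsumC_ext.
  intros [m n] _. unfold e; simpl. rewrite !Cpow_add_r. ring.
Qed.

Lemma pow_le1 (s : R) n : (0 <= s <= 1)%R -> (s ^ n <= 1)%R.
Proof. intros H. induction n; simpl. lra. pose proof (pow_le s n (proj1 H)). nra. Qed.

Lemma pow_dec (s : R) a b : (0 <= s <= 1)%R -> (a <= b)%nat -> (s ^ b <= s ^ a)%R.
Proof.
  intros H Hab. replace b with (a + (b - a))%nat by lia. rewrite pow_add.
  pose proof (pow_le s a (proj1 H)). pose proof (pow_le1 s (b - a) H). nra.
Qed.

Lemma geom_sum (s : R) K : (lsumR (fun m => s ^ m) (seq 0 K) * (1 - s) = 1 - s ^ K)%R.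
Proof.
  induction K. simpl. ring. rewrite seq_S, lsumR_app. simpl.
  replace ((lsumR (fun m : nat => s ^ m) (seq 0 K) + (s ^ K + 0)) * (1 - s))%R
    with (lsumR (fun m : nat => s ^ m) (seq 0 K) * (1 - s) + s ^ K * (1 - s))%R by ring.
  rewrite IHK. ring.
Qed.

Lemma geom_bound (s : R) K : (0 <= s < 1)%R -> (lsumR (fun m => s ^ m) (seq 0 K) <= / (1 - s))%R.
Proof.
  intros H. pose proof (geom_sum s K). pose proof (pow_le s K (proj1 H)).
  apply Rmult_le_reg_r with (1 - s)%R. lra. rewrite H0, Rinv_l by lra. lra.
Qed.


Lemma DS_cv : cv (ps dco) (z ^ c * CSeries (fun m => z ^ g m) * CSeries (fun n => z ^ h n)).
Proof.
  set (r := Cmod z). assert (Hr0 : (0 <= r)%R) by apply Cmod_ge_0.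
  set (s := sqrt r). assert (Hs2 : (s * s = r)%R) by (apply sqrt_sqrt; auto).
  assert (Hs0 : (0 <= s)%R) by apply sqrt_pos.
  assert (Hs1 : (s < 1)%R) by (fold r in Hz; nra).
  assert (Hr1 : (r < 1)%R) by exact Hz.
  assert (Ha : forall m, (Cmod (z ^ g m) <= r ^ m)%R).
  { intros m. rewrite Cmod_pow. apply pow_dec; auto. lra. }
  assert (Hb : forall n, (Cmod (z ^ h n) <= r ^ n)%R).
  { intros n. rewrite Cmod_pow. apply pow_dec; auto. lra. }
  assert (Er : ex_series (fun n => r ^ n)%R).
  { exists (/ (1 - r))%R. apply is_series_geom. rewrite Rabs_right; lra. }
  pose proof (Lex _ _ Ha Er) as cva. pose proof (Lex _ _ Hb Er) as cvb.
  set (A := CSeries (fun m => z ^ g m)) in *. set (B := CSeries (fun n => z ^ h n)) in *.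
  set (pa := ps (fun m => z ^ g m)) in *. set (pb := ps (fun n => z ^ h n)) in *.
  intros eps Heps.
  set (Gr := (/ (1 - r))%R). set (Gs := (/ (1 - s))%R).
  assert (HGr : (0 < Gr)%R) by (apply Rinv_0_lt_compat; lra).
  assert (HGs : (0 < Gs)%R) by (apply Rinv_0_lt_compat; lra).
  assert (Hpb : forall K, (Cmod (pb K) <= Gr)%R).
  { intros K. unfold pb, ps. eapply Rle_trans. apply Cmod_lsum.
    eapply Rle_trans. apply lsumR_le with (g := fun n => (r ^ n)%R). intros; apply Hb.
    apply geom_bound. lra. }
  assert (HA : (0 <= Cmod A)%R) by apply Cmod_ge_0.
  destruct (cva (eps / (3 * (Gr + 1)))%R) as [N1 H1].
  { apply Rdiv_lt_0_compat; lra. }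
  destruct (cvb (eps / (3 * (Cmod A + 1)))%R) as [N2 H2].
  { apply Rdiv_lt_0_compat; lra. }
  destruct (pow_lt_1_zero s ltac:(rewrite Rabs_right; lra) (eps / (3 * (Gs * Gs + 1)))%R) as [N3 H3].
  { apply Rdiv_lt_0_compat. lra. nra. }
  exists (N1 + N2 + N3)%nat. intros K HK.
  specialize (H1 K ltac:(lia)). specialize (H2 K ltac:(lia)). specialize (H3 K ltac:(lia)).
  rewrite Rabs_right in H3 by (apply Rle_ge, pow_le; auto).
  set (D := z ^ c * pa K * pb K - ps dco K).
  assert (HD : (Cmod D <= s ^ K * (Gs * Gs))%R).
  { unfold D, pa, pb. rewrite ps_ab, ps_d, <- lsumC_minus. eapply Rle_trans. apply Cmod_lsum.
    eapply Rle_trans. apply lsumR_le with (g := fun p => (s ^ K * (s ^ (fst p) * s ^ (snd p)))%R).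
    - intros [m n] _. simpl fst; simpl snd.
      destruct (Nat.ltb (e (m, n)) K) eqn:EK; cbv beta iota.
      + replace (z ^ e (m, n) - z ^ e (m, n)) with (RtoC 0%R) by ring. rewrite Cmod_0.
        pose proof (pow_le s K Hs0); pose proof (pow_le s m Hs0); pose proof (pow_le s n Hs0).
        apply Rmult_le_pos; auto. apply Rmult_le_pos; auto.
      + replace (z ^ e (m, n) - RtoC 0%R) with (z ^ e (m, n)) by ring. rewrite Cmod_pow. fold r.
        rewrite <- Hs2. replace (s * s)%R with (s ^ 2)%R by ring. rewrite <- pow_mult.
        rewrite <- !pow_add. apply pow_dec. lra.
        apply Nat.ltb_ge in EK. unfold e in *; simpl in *. specialize (Hg m); specialize (Hh n). lia.
    - unfold natbox. rewrite lsumR_scal, <- lsumR_prod.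
      pose proof (geom_bound s K ltac:(lra)). pose proof (pow_le s K Hs0).
      assert (0 <= lsumR (fun m => s ^ m) (seq 0 K))%R by (apply lsumR_ge0; intros; apply pow_le; auto).
      apply Rmult_le_compat_l; auto. apply Rmult_le_compat; auto. }
  replace (ps dco K - z ^ c * A * B) with
    (z ^ c * ((pa K - A) * pb K + A * (pb K - B)) + - D) by (unfold D; ring).
  eapply Rle_lt_trans. apply Cmod_triangle. rewrite Cmod_opp.
  rewrite Cmod_mult, Cmod_pow. fold r.
  assert (Hrc : (0 <= r ^ c <= 1)%R) by (split; [apply pow_le; auto | apply pow_le1; lra]).
  assert (HX : (Cmod ((pa K - A) * pb K + A * (pb K - B)) < 2 * eps / 3)%R).
  { eapply Rle_lt_trans. apply Cmod_triangle. rewrite !Cmod_mult.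
    pose proof (Cmod_ge_0 (pa K - A)); pose proof (Cmod_ge_0 (pb K - B)); pose proof (Cmod_ge_0 (pb K)).
    pose proof (Hpb K).
    assert (Cmod (pa K - A) * Cmod (pb K) <= eps / (3 * (Gr + 1)) * Gr)%R.
    { apply Rmult_le_compat; lra. }
    assert (Cmod A * Cmod (pb K - B) <= Cmod A * (eps / (3 * (Cmod A + 1))))%R.
    { apply Rmult_le_compat_l; lra. }
    assert (eps / (3 * (Gr + 1)) * Gr < eps / 3)%R.
    { unfold Rdiv. rewrite Rinv_mult. apply Rmult_lt_reg_r with (Gr + 1)%R. lra.
      field_simplify; try lra. }
    assert (Cmod A * (eps / (3 * (Cmod A + 1))) < eps / 3)%R.
    { unfold Rdiv. rewrite Rinv_mult. apply Rmult_lt_reg_r with (Cmod A + 1)%R. lra.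
      field_simplify; try lra. }
    lra. }
  assert (HD2 : (s ^ K * (Gs * Gs) < eps / 3)%R).
  { assert (0 < Gs * Gs)%R by nra.
    apply Rle_lt_trans with (eps / (3 * (Gs * Gs + 1)) * (Gs * Gs))%R.
    apply Rmult_le_compat_r; lra.
    unfold Rdiv. rewrite Rinv_mult. apply Rmult_lt_reg_r with (Gs * Gs + 1)%R. lra.
    field_simplify; try lra. }
  pose proof (Cmod_ge_0 ((pa K - A) * pb K + A * (pb K - B))).
  assert (r ^ c * Cmod ((pa K - A) * pb K + A * (pb K - B)) <= Cmod ((pa K - A) * pb K + A * (pb K - B)))%R.
  { rewrite <- (Rmult_1_l (Cmod _)) at 2. apply Rmult_le_compat_r; lra. }
  lra.
Qed.

Lemma DS : CSeries dco = z ^ c * CSeries (fun m => z ^ g m) * CSeries (fun n => z ^ h n).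
Proof. apply L1, DS_cv. Qed.

End DS.

Lemma cv_plus u v l m : cv u l -> cv v m -> cv (fun n => u n + v n) (l + m).
Proof.
  intros Hu Hv eps Heps.
  destruct (Hu (eps / 2)%R ltac:(lra)) as [N1 H1]. destruct (Hv (eps / 2)%R ltac:(lra)) as [N2 H2].
  exists (N1 + N2)%nat. intros n Hn.
  replace (u n + v n - (l + m)) with ((u n - l) + (v n - m)) by ring.
  eapply Rle_lt_trans. apply Cmod_triangle.
  specialize (H1 n ltac:(lia)). specialize (H2 n ltac:(lia)). lra.
Qed.

Lemma cv_ps_plus a b l m : cv (ps a) l -> cv (ps b) m -> cv (ps (fun n => a n + b n)) (l + m).
Proof.
  intros Ha Hb. intros eps Heps. destruct (cv_plus _ _ _ _ Ha Hb eps Heps) as [N HN].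
  exists N. intros n Hn. unfold ps. rewrite lsumC_plus. apply HN, Hn.
Qed.

Lemma CSeries_ext a b : (forall n, a n = b n) -> CSeries a = CSeries b.
Proof.
  intros H. unfold CSeries. f_equal; apply Series_ext; intros n; rewrite H; reflexivity.
Qed.

Lemma psi_pow (q : C) k : rpsi (q ^ k) = CSeries (fun n => q ^ (k * T n)%nat).
Proof. unfold rpsi. apply CSeries_ext. intros n. rewrite Cpow_mult_r. reflexivity. Qed.

Lemma phi_pow (q : C) k : rphi (q ^ k) =
  CSeries (fun n => q ^ (k * (n * n))%nat) + CSeries (fun n => q ^ (k * (S n * S n))%nat).
Proof. unfold rphi. f_equal; apply CSeries_ext; intros n; rewrite Cpow_mult_r with (c := q) (n := k); reflexivity. Qed.

Lemma Cmod_pow_lt (q : C) k : (Cmod q < 1)%R -> (Cmod (q ^ S k) < 1)%R.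
Proof.
  intros H. rewrite Cmod_pow. pose proof (Cmod_ge_0 q).
  induction k. simpl. lra. simpl in *. nra.
Qed.

Lemma Cpow_O (q : C) : q ^ 0 = 1.
Proof. reflexivity. Qed.

Ltac gtac := intros; match goal with |- (?m <= _)%nat => pose proof (T_ge m); pose proof (sq_ge m); pose proof (sq_ge (S m)); nia end.

Theorem lemma5p1 (q : C) (hq : (Cmod q < 1)%R) :
  rpsi q * rpsi (q ^ 7) =
    rpsi (q ^ 8) * rphi (q ^ 28)
  + q ^ 6 * rphi (q ^ 4) * rpsi (q ^ 56)
  + q * rpsi (q ^ 16) * rphi (q ^ 56)
  + q ^ 3 * rpsi (q ^ 4) * rpsi (q ^ 28)
  + q ^ 13 * rphi (q ^ 8) * rpsi (q ^ 112).
Proof.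
  assert (LHS : rpsi q * rpsi (q ^ 7) = CSeries (dco q 0 T (fun n => 7 * T n)%nat)).
  { rewrite DS by (auto; gtac). rewrite psi_pow. rewrite Cpow_O, Cmult_1_l. reflexivity. }
  rewrite LHS. clear LHS.
  set (d1 := dco q 0 (fun a => 8 * T a)%nat (fun b => 28 * (b * b))%nat).
  set (d2 := dco q 0 (fun a => 8 * T a)%nat (fun k => 28 * (S k * S k))%nat).
  set (d3 := dco q 6 (fun c => 4 * (c * c))%nat (fun d => 56 * T d)%nat).
  set (d4 := dco q 6 (fun k => 4 * (S k * S k))%nat (fun d => 56 * T d)%nat).
  set (d5 := dco q 1 (fun a => 16 * T a)%nat (fun b => 56 * (b * b))%nat).
  set (d6 := dco q 1 (fun a => 16 * T a)%nat (fun k => 56 * (S k * S k))%nat).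
  set (d7 := dco q 3 (fun a => 4 * T a)%nat (fun b => 28 * T b)%nat).
  set (d8 := dco q 13 (fun c => 8 * (c * c))%nat (fun d => 112 * T d)%nat).
  set (d9 := dco q 13 (fun k => 8 * (S k * S k))%nat (fun d => 112 * T d)%nat).
  rewrite (CSeries_ext _ (fun N => d1 N + d2 N + d3 N + d4 N + d5 N + d6 N + d7 N + d8 N + d9 N)).
  2: { intros N. unfold d1, d2, d3, d4, d5, d6, d7, d8, d9, dco. rewrite count_identity.
       rewrite !plus_INR, !RtoC_plus. ring. }
  erewrite L1.
  2: { repeat apply cv_ps_plus; apply DS_cv; auto; gtac. }
  rewrite !psi_pow, !phi_pow. rewrite !Cpow_O, Cpow_1_r. cbv beta. ring.
Qed.
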